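(* Let $P=(I,J,K)$ be a reduced presentation, and let $\mathbf A_\Delta$, $\bar g$ and $\mathbf B_\Delta$ be as defined in the context. Then $\mathbf B_\Delta$ is isomorphic to the free one-generated algebra $\mathbf F_{\mathcal V(P)}(x)$ of the variety $\mathcal V(P)$.
   Context: Wajsberg hoops: basic hoops satisfying $(x\to y)\to y\approx(y\to x)\to x$. $\Gamma(\mathbf G,u)$ is the Wajsberg hoop on $[0,u]$ with $ab=\max\{a+b-u,0\}$, $a\to b=\min\{u-a+b,u\}$; $\mathbf{\L}_n=\Gamma(\mathbb Z,n)$ (elements $0,\dots,n$), $\mathbf{\L}_{n,k}=\Gamma(\mathbb Z\times_l\mathbb Z,(n,k))$ (elements are pairs $(r,s)$ with $(0,0)\le(r,s)\le(n,k)$ lexicographically), $\mathbf{\L}_n^\infty=\mathbf{\L}_{n,0}$, $\mathbf C_\omega$ the negative cone of $\mathbb Z$, i.e. the free monoid on one generator $c$ with $c^l\to c^m=c^{\max(l-m,0)}$. In a bounded Wajsberg hoop, $\neg a=a\to0$. $X{\downarrow}$ = set of divisors of elements of $X$. A presentation $P=(I,J,K)$ ($I,J$ finite subsets of $\mathbb N\setminus\{0\}$, $K\subseteq\{\omega\}$) is reduced if $I\cup J\cup K\ne\emptyset$, $J\ne\emptyset\Rightarrow K=\emptyset$, no $m\in I$ divides any element of $(I\setminus\{m\})\cup J$, and no $n\in J$ divides any element of $J\setminus\{n\}$. $\mathcal K_P=\{\mathbf{\L}_i:i\in I\}\cup\{\mathbf{\L}_j^\infty:j\in J\}$ if $K=\emptyset$,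 and $\{\mathbf{\L}_i:i\in I\}\cup\{\mathbf C_\omega\}$ if $K=\{\omega\}$; $\mathcal V(P)=\mathbf{HSP}(\mathcal K_P)$. Generators: for $k\ge2$ and $0\le h<k$ with $\gcd(k,h)=1$, $g_{k,h}$ denotes the unique element $a\in\mathbf{\L}_{k,h}$ with $a\le\neg a$ that generates $\mathbf{\L}_{k,h}$ (the generators of $\mathbf{\L}_{k,h}$ are exactly $g_{k,h}$ and $\neg g_{k,h}$); $g_{1,0}=(0,1)\in\mathbf{\L}_{1,0}$. Construction: $\Delta_I=\{(k,h,2):0\le h<k\in I{\downarrow},\gcd(k,h)=1\}$, $\Delta_J=\{(k,h,i):i\in\{0,1\},0\le h<k\in J{\downarrow},\gcd(k,h)=1\}$, $\Delta_K=\{(0,0,3)\}$ if $K=\{\omega\}$ and $\Delta_K=\emptyset$ otherwise; $\Delta=\Delta_I\cup\Delta_J\cup\Delta_K$. Put $\mathbf A^0_{k,h}=\mathbf A^1_{k,h}=\mathbf{\L}_{k,h}$, $\mathbf A^2_{k,h}=\mathbf{\L}_k$, $\mathbf A^3_{k,h}=\mathbf C_\omega$, and $\mathbf A_\Delta=\prod_{(k,h,i)\in\Delta}\mathbf A^i_{k,h}$. Define $\bar g\in A_\Delta$ by $\bar g(k,h,0)=g_{k,h}$, $\bar g(k,h,1)=\neg g_{k,h}$, $\bar g(k,h,2)=h\in\mathbf{\L}_k$, $\bar g(0,0,3)=c$. $\mathbf B_\Delta$ is the subalgebra of $\mathbf A_\Delta$ generated by $\bar g$. *)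

(* Defs.v *)
From mathcomp Require Import all_boot all_order all_algebra.
Set Implicit Arguments. Unset Strict Implicit. Unset Printing Implicit Defensive.
Import Order.TTheory GRing.Theory Num.Theory.

(* An algebra is given by an ambient carrier type, a membership predicate
   singling out its universe, and the operations (only their values on the
   universe matter). *)
Record halg := HAlg {
  hcar : Type;
  hmem : hcar -> Prop;
  hmul : hcar -> hcar -> hcar;
  himp : hcar -> hcar -> hcar;
  hone : hcar }.

Inductive term := Var | One | Mul of term & term | Imp of term & term.

Unset Implicit Arguments.
Fixpoint eval (A : halg) (x : hcar A) (t : term) : hcar A :=
  match t with
  | Var => x
  | One => @hone A
  | Mul t1 t2 => @hmul A (eval A x t1) (eval A x t2)
  | Imp t1 t2 => @himp A (eval A x t1) (eval A x t2)
  end.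
Set Implicit Arguments.

Definition generated (A : halg) (g b : hcar A) : Prop :=
  forall S : hcar A -> Prop,
    S (@hone A) ->
    (forall x y, S x -> S y -> S (@hmul A x y)) ->
    (forall x y, S x -> S y -> S (@himp A x y)) ->
    S g -> S b.

Definition holds (A : halg) (t s : term) : Prop :=
  forall a, @hmem A a -> eval A a t = eval A a s.

(* A subalgebra B (given as a subset of A) is isomorphic to the free
   one-generated algebra F_K(x) = T(x)/theta_K, theta_K being the congruence
   of identities valid in the class K: there is a homomorphism from the term
   algebra onto B whose kernel is theta_K. *)
Definition iso_to_free (theta : term -> term -> Prop) (A : halg)
    (B : hcar A -> Prop) : Prop :=
  exists phi : term -> hcar A,
    [/\ phi One = @hone A,
        (forall t s, phi (Mul t s) = @hmul A (phi t) (phi s)),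
        (forall t s, phi (Imp t s) = @himp A (phi t) (phi s)),
        ((forall t, B (phi t)) /\ (forall b, B b -> exists t, phi t = b))
      & (forall t s, phi t = phi s <-> theta t s)].

Local Open Scope ring_scope.

Definition zz := (int * int)%type.

Definition lexle (a b : zz) : bool :=
  (a.1 < b.1) || ((a.1 == b.1) && (a.2 <= b.2)).
Definition lexmax (a b : zz) : zz := if lexle a b then b else a.
Definition lexmin (a b : zz) : zz := if lexle a b then a else b.
Definition zadd (a b : zz) : zz := (a.1 + b.1, a.2 + b.2).
Definition zsub (a b : zz) : zz := (a.1 - b.1, a.2 - b.2).

(* Gamma(Z x_l Z, u) operations *)
Definition gam_mul (u a b : zz) : zz := lexmax (zsub (zadd a b) u) (0, 0).
Definition gam_imp (u a b : zz) : zz := lexmin (zadd (zsub u a) b) u.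

Record zalg := ZAlg {
  zmem : zz -> Prop;
  zmul : zz -> zz -> zz;
  zimp : zz -> zz -> zz;
  zone : zz }.

Definition toH (Z : zalg) : halg := HAlg (zmem Z) (zmul Z) (zimp Z) (zone Z).

(* L_n = Gamma(Z, n): element r in {0..n} is encoded as (r, 0) *)
Definition Luk (n : nat) : zalg :=
  ZAlg (fun a => a.2 = 0 /\ (0 <= a.1 <= n%:Z))
       (fun a b => (Num.max (a.1 + b.1 - n%:Z) 0, 0))
       (fun a b => (Num.min (n%:Z - a.1 + b.1) n%:Z, 0))
       (n%:Z, 0).

Definition LukP (n k : nat) : zalg :=
  let u : zz := (n%:Z, k%:Z) in
  ZAlg (fun a => lexle (0, 0) a && lexle a u)
       (gam_mul u) (gam_imp u) u.

Definition negP (n k : nat) (a : zz) : zz := gam_imp (n%:Z, k%:Z) a (0, 0).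

(* C_omega = negative cone of Z: element c^l is encoded as (-l, 0);
   a.b = a + b, a -> b = min(0, b - a) *)
Definition Cw : zalg :=
  ZAlg (fun a => a.1 <= 0 /\ a.2 = 0)
       (fun a b => (a.1 + b.1, 0))
       (fun a b => (Num.min 0 (b.1 - a.1), 0))
       (0, 0).

Definition cgen : zz := (-1, 0).

Local Close Scope ring_scope.

(* P = (I, J, K): I, J finite sets of positive naturals (given as lists),
   K : bool encodes K = {omega} (true) or K = emptyset (false). *)
Definition reduced (I J : seq nat) (K : bool) : Prop :=
  [/\ (forall m, m \in I -> 0 < m) /\ (forall m, m \in J -> 0 < m),
      (I != [::]) || (J != [::]) || K,
      (J != [::] -> K = false),
      (forall m x, m \in I -> x \in I -> x != m -> ~~ (m %| x)) /\
      (forall m x, m \in I -> x \in J -> ~~ (m %| x))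
    & (forall n x, n \in J -> x \in J -> x != n -> ~~ (n %| x))].

Definition thetaP (I J : seq nat) (K : bool) (t s : term) : Prop :=
  (forall i, i \in I -> holds (toH (Luk i)) t s) /\
  (if K then holds (toH Cw) t s
   else forall j, j \in J -> holds (toH (LukP j 0)) t s).

Definition divset (X : seq nat) (k : nat) : bool := has (fun m => k %| m) X.

Definition inDelta (I J : seq nat) (K : bool) (d : nat * nat * nat) : bool :=
  let: (k, h, i) := d in
  [&& i == 2, h < k, divset I k & coprime k h]
  || [&& (i == 0) || (i == 1), h < k, divset J k & coprime k h]
  || [&& K, k == 0, h == 0 & i == 3].

Definition DeltaT (I J : seq nat) (K : bool) := {d : nat * nat * nat | inDelta I J K d}.

Definition comp (d : nat * nat * nat) : zalg :=
  let: (k, h, i) := d in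
  match i with
  | O | S O => LukP k h
  | S (S O) => Luk k
  | _ => Cw
  end.

Definition ADelta (I J : seq nat) (K : bool) : halg :=
  @HAlg (DeltaT I J K -> zz)
    (fun f => forall d, zmem (comp (val d)) (f d))
    (fun f g d => zmul (comp (val d)) (f d) (g d))
    (fun f g d => zimp (comp (val d)) (f d) (g d))
    (fun d => zone (comp (val d))).

(* gsel k h plays the role of g_{k,h} *)
Definition gbar (gsel : nat -> nat -> zz) (d : nat * nat * nat) : zz :=
  let: (k, h, i) := d in
  match i with
  | O => gsel k h
  | S O => negP k h (gsel k h)
  | S (S O) => (Posz h, 0%R)
  | _ => cgen
  end.

Definition gbarD (I J : seq nat) (K : bool) (gsel : nat -> nat -> zz) :
  hcar (ADelta I J K) := fun d => gbar gsel (val d).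

Definition BDelta (I J : seq nat) (K : bool) (gsel : nat -> nat -> zz) :
  hcar (ADelta I J K) -> Prop :=
  @generated (ADelta I J K) (@gbarD I J K gsel).

Definition gen_spec (gsel : nat -> nat -> zz) : Prop :=
  gsel 1 0 = (0%R, 1%R) /\
  forall k h, 2 <= k -> h < k -> coprime k h ->
    [/\ zmem (LukP k h) (gsel k h),
        lexle (gsel k h) (negP k h (gsel k h))
      & forall b, zmem (LukP k h) b ->
          @generated (toH (LukP k h)) (gsel k h) b].

(* Main.v *)
Require Import Defs.
From mathcomp Require Import all_boot all_order all_algebra zify ring.
From Stdlib Require Import FunctionalExtensionality.
Set Implicit Arguments. Unset Strict Implicit. Unset Printing Implicit Defensive.
Import Order.TTheory GRing.Theory Num.Theory.
Local Open Scope ring_scope.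

Lemma eval_hom (Z1 Z2 : zalg) (f : zz -> zz) :
  (forall a b, f (zmul Z1 a b) = zmul Z2 (f a) (f b)) ->
  (forall a b, f (zimp Z1 a b) = zimp Z2 (f a) (f b)) ->
  f (zone Z1) = zone Z2 ->
  forall a t, eval (toH Z2) (f a) t = f (eval (toH Z1) a t).
Proof.
move=> hm hi ho a; elim=> /= [|//|t1 IH1 t2 IH2|t1 IH1 t2 IH2].
- done.
- by rewrite IH1 IH2 hm.
- by rewrite IH1 IH2 hi.
Qed.

Lemma lexle_antisym a b : lexle a b -> lexle b a -> a = b.
Proof. case: a b => [a1 a2] [b1 b2]; rewrite /lexle /= => H1 H2.
have [E1 E2] : a1 = b1 /\ a2 = b2 by lia.
by rewrite E1 E2. Qed.

Lemma lexle_total a b : ~~ lexle a b -> lexle b a.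
Proof. case: a b => [a1 a2] [b1 b2]; rewrite /lexle /=; lia. Qed.

Definition lmap (m p q : int) (a : zz) : zz := (m * a.1, p * a.1 + q * a.2).

Lemma lmap_mono m p q a b : 0 < m -> 0 <= q -> lexle a b -> lexle (lmap m p q a) (lmap m p q b).
Proof. case: a b => [a1 a2] [b1 b2]; rewrite /lexle /lmap /= => Hm Hq.
case/orP => [H|/andP [/eqP E H]].
- by rewrite ltr_pM2l // H.
- apply/orP; right; rewrite E eqxx /=. by rewrite lerD2l ler_wpM2l.
Qed.

Lemma lmap_max m p q a b : 0 < m -> 0 <= q ->
  lmap m p q (lexmax a b) = lexmax (lmap m p q a) (lmap m p q b).
Proof. move=> Hm Hq; rewrite /lexmax.
case: (boolP (lexle a b)) => H.
- by rewrite (lmap_mono p Hm Hq H).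
- have H' := lexle_total H.
  case: (boolP (lexle (lmap m p q a) (lmap m p q b))) => // H2.
  by apply: lexle_antisym => //; apply: lmap_mono.
Qed.

Lemma lmap_min m p q a b : 0 < m -> 0 <= q ->
  lmap m p q (lexmin a b) = lexmin (lmap m p q a) (lmap m p q b).
Proof. move=> Hm Hq; rewrite /lexmin.
case: (boolP (lexle a b)) => H.
- by rewrite (lmap_mono p Hm Hq H).
- have H' := lexle_total H.
  case: (boolP (lexle (lmap m p q a) (lmap m p q b))) => // H2.
  by apply: lexle_antisym => //; apply: lmap_mono.
Qed.

Lemma mulmax0 (m x : int) : 0 <= m -> m * Num.max x 0 = Num.max (m*x) 0.
Proof. move=> H; nia. Qed.
Lemma mulmin (m x y : int) : 0 <= m -> m * Num.min x y = Num.min (m*x) (m*y).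
Proof. move=> H; case: (lerP x y) => H'; nia. Qed.

Lemma hom_LukP (k h j : nat) (m p q : int) : 0 < m -> 0 <= q ->
  m * k%:Z = j%:Z -> p * k%:Z + q * h%:Z = 0 ->
  forall a t, eval (toH (LukP j 0)) (lmap m p q a) t = lmap m p q (eval (toH (LukP k h)) a t).
Proof.
move=> Hm Hq E1 E2; apply: eval_hom => /=.
- move=> [a1 a2] [b1 b2]; rewrite /gam_mul lmap_max //; congr lexmax.
  + rewrite /lmap /zsub /zadd /=; congr pair; rewrite -?E1; first ring.
    have -> : 0%Z = p * k%:Z + q * h%:Z by rewrite E2.
    ring.
  + by rewrite /lmap /= !mulr0 addr0.
- move=> [a1 a2] [b1 b2]; rewrite /gam_imp lmap_min //; congr lexmin.
  + rewrite /lmap /zsub /zadd /=; congr pair; rewrite -?E1; first ring.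
    have -> : 0%Z = p * k%:Z + q * h%:Z by rewrite E2.
    ring.
  + rewrite /lmap /= E1; congr pair; by rewrite E2.
- rewrite /lmap /= E1; congr pair; by rewrite E2.
Qed.

Definition lmapL (m : int) (a : zz) : zz := (m * a.1, a.2).

Lemma hom_Luk (k i : nat) (m : int) : 0 < m -> m * k%:Z = i%:Z ->
  forall a t, eval (toH (Luk i)) (lmapL m a) t = lmapL m (eval (toH (Luk k)) a t).
Proof.
move=> Hm E; apply: eval_hom => /=.
- move=> [a1 a2] [b1 b2]; rewrite /lmapL /= -E; congr pair.
  rewrite mulmax0 ?ltW //; congr Num.max; ring.
- move=> [a1 a2] [b1 b2]; rewrite /lmapL /= -E; congr pair.
  rewrite mulmin ?ltW //; congr Num.min; ring.
- by rewrite /lmapL /= E.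
Qed.

Definition lmapC (l : int) (a : zz) : zz := (l * a.1, 0).

Lemma hom_Cw (l : int) : 0 <= l ->
  forall a t, eval (toH Cw) (lmapC l a) t = lmapC l (eval (toH Cw) a t).
Proof.
move=> Hl; apply: eval_hom => /=.
- move=> [a1 a2] [b1 b2]; rewrite /lmapC /=; congr pair; ring.
- move=> [a1 a2] [b1 b2]; rewrite /lmapC /=; congr pair.
  rewrite mulmin // mulr0; congr Num.min; ring.
- by rewrite /lmapC /= mulr0.
Qed.

Lemma top_Luk (i : nat) t : eval (toH (Luk i)) (i%:Z, 0) t = (i%:Z, 0).
Proof. elim: t => //= [t1 -> t2 ->|t1 -> t2 ->]; congr pair => /=; lia. Qed.

Lemma unit_int (c d : int) : c * d = 1 -> d = 1 \/ d = -1.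
Proof. move=> H; have := intUnitRing.unitzPl H.
rewrite qualifE /= => /orP [/eqP->|/eqP->]; by [left|right]. Qed.

Lemma gen_det (k h : nat) (g : zz) : (2 <= k)%N ->
  (forall b, zmem (LukP k h) b -> @generated (toH (LukP k h)) g b) ->
  g.1 * h%:Z - g.2 * k%:Z = 1 \/ g.1 * h%:Z - g.2 * k%:Z = -1.
Proof.
case: g => x0 y0 /= Hk Hgen.
pose S (b : zz) := exists al be : int, b = (al * x0 + be * k%:Z, al * y0 + be * h%:Z).
have HS : forall b, zmem (LukP k h) b -> S b.
  move=> b Hb; apply: (Hgen b Hb) => /=.
  - by exists 0, 1; congr pair; ring.
  - move=> x y [a1 [b1 ->]] [a2 [b2 ->]]; rewrite /gam_mul /lexmax; case: ifP => _.
    + by exists 0, 0; congr pair; ring.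
    + by exists (a1+a2), (b1+b2-1); rewrite /zsub /zadd /=; congr pair; ring.
  - move=> x y [a1 [b1 ->]] [a2 [b2 ->]]; rewrite /gam_imp /lexmin; case: ifP => _.
    + by exists (a2 - a1), (1 - b1 + b2); rewrite /zsub /zadd /=; congr pair; ring.
    + by exists 0, 1; congr pair; ring.
  - by exists 1, 0; congr pair; ring.
have [a1 [b1 [E11 E12]]] : S (1, 0).
  apply: HS; rewrite /= /lexle /=; lia.
have [a2 [b2 [E21 E22]]] : S (0, 1).
  apply: HS; rewrite /= /lexle /=; lia.
apply: (@unit_int (a1*b2 - a2*b1)).
have -> : (a1*b2 - a2*b1) * (x0*h%:Z - y0*k%:Z) =
  (a1*x0 + b1*k%:Z)*(a2*y0+b2*h%:Z) - (a1*y0+b1*h%:Z)*(a2*x0+b2*k%:Z) by ring.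
by rewrite -E11 -E12 -E21 -E22; ring.
Qed.

Lemma split_gcd (j r : nat) : (0 < j)%N -> (r < j)%N ->
  exists g k x : nat, [/\ (0 < g)%N, j = (k * g)%N, r = (x * g)%N, coprime k x & (x < k)%N].
Proof.
move=> Hj Hr. have Hg : (0 < gcdn j r)%N by rewrite gcdn_gt0 Hj.
exists (gcdn j r), (j %/ gcdn j r)%N, (r %/ gcdn j r)%N.
have Ej : j = (j %/ gcdn j r * gcdn j r)%N by rewrite divnK // dvdn_gcdl.
have Er : r = (r %/ gcdn j r * gcdn j r)%N by rewrite divnK // dvdn_gcdr.
split => //.
- have H : gcdn j r = (gcdn (j %/ gcdn j r) (r %/ gcdn j r) * gcdn j r)%N
    by rewrite muln_gcdl -Ej -Er.
  rewrite /coprime; apply/eqP; move: H Hg.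
  move: (gcdn j r) (gcdn _ _) => a b; nia.
- by rewrite -(ltn_pmul2r Hg) -Ej -Er.
Qed.

Lemma coprime_of_rel (k h x : nat) (z eps : int) : (0 < k)%N ->
  (eps = 1 \/ eps = -1) -> x%:Z * h%:Z - z * k%:Z = eps -> coprime k h.
Proof.
move=> Hk Heps E.
have /dvdnP [a Ha] := dvdn_gcdl k h.
have /dvdnP [b Hb] := dvdn_gcdr k h.
rewrite /coprime; move: Ha Hb; move: (gcdn k h) => c Ha Hb.
rewrite Ha Hb !PoszM in E.
have E2 : c%:Z * (x%:Z * b%:Z - z * a%:Z) = eps by rewrite -E; ring.
have E3 : (eps * (x%:Z * b%:Z - z * a%:Z)) * c%:Z = 1.
  by rewrite -mulrA (mulrC _ c%:Z) E2; case: Heps => ->; lia.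
have := unit_int E3; move=> H; apply/eqP; lia.
Qed.

Lemma choose_h (k x : nat) (eps : int) : (1 < k)%N -> coprime k x -> (0 < x)%N ->
  (eps = 1 \/ eps = -1) ->
  exists (h : nat) (z : int), [/\ (h < k)%N, coprime k h & x%:Z * h%:Z - z * k%:Z = eps].
Proof.
move=> Hk Hco Hx Heps.
have [h0 [z0 E0]] : exists (h0 : nat) (z0 : int), x%:Z * h0%:Z - z0 * k%:Z = eps.
  case: Heps => ->.
  - have : coprime x k by rewrite coprime_sym.
    case/(coprimeP _ Hx) => [[u1 u2] /= Hu]; exists u1, u2%:Z; nia.
  - have Hk0 : (0 < k)%N by apply: ltnW.
    case/(coprimeP _ Hk0): Hco => [[u1 u2] /= Hu]; exists u2, u1%:Z; nia.
have Hd := divn_eq h0 k.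
have Hk0 : (0 < k)%N by apply: ltnW.
have E : x%:Z * (h0 %% k)%N%:Z - (z0 - x%:Z * (h0 %/ k)%N%:Z) * k%:Z = eps.
  rewrite -E0; move: Hd; move: (h0 %/ k)%N (h0 %% k)%N => q r Hd; rewrite Hd PoszD PoszM; ring.
exists (h0 %% k)%N, (z0 - x%:Z * (h0 %/ k)%N%:Z); split => //.
- by rewrite ltn_pmod.
- exact: coprime_of_rel Hk0 Heps E.
Qed.

Lemma coord_eq (k x z x0 y0 eps h : int) : (eps = 1 \/ eps = -1) ->
  x*h - z*k = eps -> x0*h - y0*k = eps -> 0 < x0 < k -> 0 < x < k -> x0 = x.
Proof.
move=> Heps E1 E2 H0 H1.
have E : k*(x*y0 - x0*z) = x0*(x*h - z*k) - x*(x0*h - y0*k) by ring.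
rewrite E1 E2 in E. case/andP: H0 => H0 H0'; case/andP: H1 => H1 H1'.
move: E; move: (x*y0 - x0*z) => w E.
have : w = 0.
  case: (ltrgtP w 0) => // Hw; case: Heps => Ee; rewrite Ee in E; nia.
move=> Hw0; rewrite Hw0 mulr0 in E; case: Heps => Ee; rewrite Ee in E; lia.
Qed.

Lemma evalA_pt I J K (f : hcar (ADelta I J K)) t d :
  eval (ADelta I J K) f t d = eval (toH (Defs.comp (val d))) (f d) t.
Proof. elim: t => //= t1 IH1 t2 IH2; by rewrite IH1 IH2. Qed.

Lemma negPeq k h (b : zz) : zmem (LukP k h) b -> Defs.negP k h b = (k%:Z - b.1, h%:Z - b.2).
Proof.
case: b => b1 b2; rewrite /Defs.negP /gam_imp /lexmin /zadd /zsub /= => /andP [H1 H2].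
rewrite ifT; first by congr pair; ring.
rewrite /lexle /= in H1 H2 *; lia.
Qed.

Lemma negPmem k h (b : zz) : zmem (LukP k h) b -> zmem (LukP k h) (Defs.negP k h b).
Proof.
move=> Hb; rewrite negPeq //; case: b Hb => b1 b2 /= /andP [H1 H2].
rewrite /lexle /= in H1 H2 *; apply/andP; split; lia.
Qed.

Lemma partI (i0 : nat) t s : (0 < i0)%N ->
  (forall k h : nat, (h < k)%N -> (k %| i0)%N -> coprime k h ->
     eval (toH (Luk k)) (h%:Z, 0) t = eval (toH (Luk k)) (h%:Z, 0) s) ->
  holds (toH (Luk i0)) t s.
Proof.
move=> Hi H [a1 a2] /= [-> /andP [Ha1 Ha1']].
have [rn Er] : exists rn : nat, a1 = rn%:Z by exists `|a1|%N; lia.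
subst a1.
case: (ltnP rn i0) => Hr.
- have [g [k [x [Hg Ej Er Hco Hxk]]]] := split_gcd Hi Hr.
  have Hm : 0 < g%:Z by lia.
  have E : g%:Z * k%:Z = i0%:Z by rewrite Ej PoszM mulrC.
  have -> : (rn%:Z, 0) = lmapL g%:Z (x%:Z, 0) by rewrite /lmapL /= Er PoszM mulrC.
  rewrite !(hom_Luk Hm E); congr lmapL; apply: H => //.
  by rewrite Ej dvdn_mulr.
- have -> : rn = i0 by lia.
  by rewrite !top_Luk.
Qed.

Lemma partC t s : eval (toH Cw) cgen t = eval (toH Cw) cgen s -> holds (toH Cw) t s.
Proof.
move=> H [a1 a2] /= [Ha1 Ha2].
have -> : (a1, a2) = lmapC (- a1) cgen by rewrite /lmapC /cgen /= Ha2; congr pair; ring.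
have Hl : 0 <= - a1 by lia.
by rewrite !(hom_Cw Hl) H.
Qed.

Lemma transferJ (k h j : nat) (m p q : int) b t s : 0 < m -> 0 <= q ->
  m * k%:Z = j%:Z -> p * k%:Z + q * h%:Z = 0 ->
  eval (toH (LukP k h)) b t = eval (toH (LukP k h)) b s ->
  eval (toH (LukP j 0)) (lmap m p q b) t = eval (toH (LukP j 0)) (lmap m p q b) s.
Proof. by move=> Hm Hq E1 E2 H; rewrite !(hom_LukP Hm Hq E1 E2) H. Qed.

Lemma no_unit (y k : int) : 1 < k -> y * k = 1 \/ y * k = -1 -> False.
Proof. move=> Hk; case: (ltrgtP y 0) => Hy [] H; nia. Qed.

Lemma partJ (j : nat) t s gsel : (0 < j)%N -> gen_spec gsel ->
  (forall k h : nat, (h < k)%N -> (k %| j)%N -> coprime k h ->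
     eval (toH (LukP k h)) (gsel k h) t = eval (toH (LukP k h)) (gsel k h) s /\
     eval (toH (LukP k h)) (Defs.negP k h (gsel k h)) t =
       eval (toH (LukP k h)) (Defs.negP k h (gsel k h)) s) ->
  holds (toH (LukP j 0)) t s.
Proof.
move=> Hj [G10 Gspec] H [r s'] /= /andP [Hm1 Hm2].
rewrite /lexle /= in Hm1 Hm2.
have H1 : (0 < 1)%N by []. have Hc10 : coprime 1 0 by [].
have Hd1 : (1 %| j)%N by rewrite dvd1n.
have [Hr0 | Hr0] : r = 0 \/ 0 < r by lia.
-
  subst r. have [Ht _] := H 1%N 0%N H1 Hd1 Hc10.
  rewrite G10 in Ht.
  have -> : ((0:int), s') = lmap j%:Z 0 s' (0, 1) by rewrite /lmap /=; congr pair; ring.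
  apply: (transferJ _ _ _ _ Ht); first [lia|ring|done].
have [Hrj | Hrj] : r = j%:Z \/ r < j%:Z by lia.
- subst r. have [_ Ht] := H 1%N 0%N H1 Hd1 Hc10.
  rewrite G10 negPeq // in Ht.
  have -> : (j%:Z, s') = lmap j%:Z 0 (- s') (Posz 1 - ((0:int), (1:int)).1, Posz 0 - ((0:int), (1:int)).2)
    by rewrite /lmap /=; congr pair; ring.
  apply: (transferJ _ _ _ _ Ht); first [lia|ring|done].
have [rn Er] : exists rn : nat, r = rn%:Z by exists `|r|%N; lia.
subst r.
have Hrn : (rn < j)%N by lia.
have [g [k [x [Hg Ej Ern Hco Hxk]]]] := split_gcd Hj Hrn.
have Hx0 : (0 < x)%N by move: Hr0; rewrite Ern; case: x {Ern Hco Hxk} => //=; lia.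
have Hk1 : (1 < k)%N by apply: leq_trans Hxk.
pose eps : int := if s' < 0 then 1 else -1.
have Heps : eps = 1 \/ eps = -1 by rewrite /eps; case: ifP; [left|right].
have [h [z [Hhk Hcoh Ehz]]] := choose_h Hk1 Hco Hx0 Heps.
have Hdk : (k %| j)%N by rewrite Ej dvdn_mulr.
have [Ht1 Ht2] := H k h Hhk Hdk Hcoh.
have [Hmem Hle Hgen] := Gspec k h Hk1 Hhk Hcoh.
have HD := gen_det Hk1 Hgen.
have Key : forall y' : int, x%:Z * h%:Z - y' * k%:Z = eps ->
    eval (toH (LukP k h)) (x%:Z, y') t = eval (toH (LukP k h)) (x%:Z, y') s ->
    eval (toH (LukP j 0)) (rn%:Z, s') t = eval (toH (LukP j 0)) (rn%:Z, s') s.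
  move=> y' Ey' Hev.
  have -> : (rn%:Z, s') = lmap g%:Z (eps * h%:Z * s') (- eps * k%:Z * s') (x%:Z, y').
    rewrite /lmap /=; congr pair; first by rewrite Ern PoszM mulrC.
    have -> : eps * h%:Z * s' * x%:Z + - eps * k%:Z * s' * y' =
              eps * s' * (x%:Z * h%:Z - y' * k%:Z) by ring.
    rewrite Ey'; case: Heps => ->; ring.
  apply: (transferJ _ _ _ _ Hev).
  - lia.
  - rewrite /eps; case: ifP => Hs; nia.
  - by rewrite Ej PoszM mulrC.
  - ring.
move: Hmem Hle Hgen HD Ht1 Ht2; case: (gsel k h) => x0 y0 /= Hmem Hle Hgen HD Ht1 Ht2.
have Hmem' := Hmem; move/andP: Hmem' => [Hm3 Hm4]; rewrite /lexle /= in Hm3 Hm4.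
have Hx0k : 0 < x0 < k%:Z.
  apply/andP; split.
  - have : x0 != 0.
      apply/eqP => E0; rewrite E0 in HD; apply: (@no_unit (- y0) k%:Z); first lia.
      case: HD => HD; [left|right]; rewrite -HD; ring.
    lia.
  - have : x0 != k%:Z.
      apply/eqP => E0; rewrite E0 in HD; apply: (@no_unit (h%:Z - y0) k%:Z); first lia.
      case: HD => HD; [left|right]; rewrite -HD; ring.
    lia.
have Hxk' : 0 < x%:Z < k%:Z by apply/andP; split; lia.
have [HDe | HDe] : x0 * h%:Z - y0 * k%:Z = eps \/ x0 * h%:Z - y0 * k%:Z = - eps.
  by case: HD => ->; case: Heps => ->; [left|right|right|left].
- have Ex := coord_eq Heps Ehz HDe Hx0k Hxk'.
  subst x0. exact: Key HDe Ht1.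
- rewrite negPeq // /= in Ht2.
  have HDe' : (k%:Z - x0) * h%:Z - (h%:Z - y0) * k%:Z = eps.
    have -> : (k%:Z - x0) * h%:Z - (h%:Z - y0) * k%:Z = - (x0 * h%:Z - y0 * k%:Z) by ring.
    by rewrite HDe opprK.
  have Hx1k : 0 < k%:Z - x0 < k%:Z by apply/andP; split; lia.
  have Ex := coord_eq Heps Ehz HDe' Hx1k Hxk'.
  rewrite Ex in HDe' Ht2. exact: Key HDe' Ht2.
Qed.

Lemma mul_inj (m a b : int) : 0 < m -> m * a = m * b -> a = b.
Proof. move=> Hm E; case: (ltrgtP a b) => // H; nia. Qed.

Lemma backI (k i0 hh : nat) t s : (hh < k)%N -> (k %| i0)%N -> (0 < i0)%N ->
  holds (toH (Luk i0)) t s ->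
  eval (toH (Luk k)) (hh%:Z, 0) t = eval (toH (Luk k)) (hh%:Z, 0) s.
Proof.
move=> Hhk /dvdnP [m Hm] Hi H.
have Hm0 : 0 < m%:Z by rewrite Hm in Hi; nia.
have E : m%:Z * k%:Z = i0%:Z by rewrite Hm PoszM.
have Hmem : zmem (Luk i0) (lmapL m%:Z (hh%:Z, 0)).
  rewrite /= /lmapL /=; split => //; rewrite Hm; nia.
have := H _ Hmem; rewrite !(hom_Luk Hm0 E).
case: (eval _ _ t) (eval _ _ s) => [a1 a2] [b1 b2]; rewrite /lmapL /= => [[E1 E2]].
by rewrite (mul_inj Hm0 E1) E2.
Qed.

Lemma backJ (k j hh : nat) b t s : (hh < k)%N -> (k %| j)%N -> (0 < j)%N ->
  zmem (LukP k hh) b -> holds (toH (LukP j 0)) t s ->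
  eval (toH (LukP k hh)) b t = eval (toH (LukP k hh)) b s.
Proof.
move=> Hhk /dvdnP [m Hm] Hj Hb H.
have Hm0 : 0 < m%:Z by rewrite Hm in Hj; nia.
have Hk0 : 0 < k%:Z by lia.
have Hq : 0 <= k%:Z by lia.
have E1 : m%:Z * k%:Z = j%:Z by rewrite Hm PoszM.
have E2 : (- hh%:Z) * k%:Z + k%:Z * hh%:Z = 0 by ring.
have Hmem : zmem (LukP j 0) (lmap m%:Z (- hh%:Z) k%:Z b).
  move: Hb => /= /andP [B1 B2]; apply/andP; split.
  - have := lmap_mono (- hh%:Z) Hm0 Hq B1.
    by rewrite /lmap /= !mulr0 addr0.
  - have := lmap_mono (- hh%:Z) Hm0 Hq B2.
    have -> // : lmap m%:Z (- hh%:Z) k%:Z (k%:Z, hh%:Z) = (j%:Z, 0).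
    by rewrite /lmap /= E1 E2.
have := H _ Hmem; rewrite !(hom_LukP Hm0 Hq E1 E2).
case: (eval _ _ t) (eval _ _ s) => [a1 a2] [b1 b2]; rewrite /lmap /= => [[F1 F2]].
have F3 := mul_inj Hm0 F1. rewrite F3 in F2 *.
have F4 : k%:Z * a2 = k%:Z * b2 by lia.
by rewrite (mul_inj Hk0 F4).
Qed.

Theorem theorem3p6 (I J : seq nat) (K : bool) (gsel : nat -> nat -> int * int) :
  reduced I J K ->
  gen_spec gsel ->
  @iso_to_free (thetaP I J K) (ADelta I J K) (@BDelta I J K gsel).
Proof.
move=> [[HIpos HJpos] Hne HJK [HII HIJ] HJJ] Hspec.
exists (fun t => eval (ADelta I J K) (@gbarD I J K gsel) t); split => //.
- split.
  + move=> t S H1 Hm Hi Hg; induction t as [| |t1 IH1 t2 IH2|t1 IH1 t2 IH2]; simpl => //.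
    * exact: Hm.
    * exact: Hi.
  + move=> b Hb; apply: (Hb (fun b => exists t, eval (ADelta I J K) (@gbarD I J K gsel) t = b)).
    * by exists One.
    * by move=> x y [t1 <-] [t2 <-]; exists (Mul t1 t2).
    * by move=> x y [t1 <-] [t2 <-]; exists (Imp t1 t2).
    * by exists Var.
- move=> t s; split.
  + move=> Heq.
    have Hd : forall d : DeltaT I J K,
        eval (toH (Defs.comp (val d))) (gbar gsel (val d)) t =
        eval (toH (Defs.comp (val d))) (gbar gsel (val d)) s.
      by move=> d; have := congr1 (fun F => F d) Heq; rewrite /= !evalA_pt.
    split.
    * move=> i0 Hi0; apply: partI; first exact: HIpos.
      move=> k h Hhk Hdk Hco.
      have Hin : inDelta I J K (k, h, 2%N).
        rewrite /inDelta; apply/orP; left; apply/orP; left.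
        apply/and4P; split => //; apply/hasP; by exists i0.
      exact: (Hd (exist _ (k, h, 2%N) Hin)).
    * case: K HJK Hd {Heq Hne} => HJK Hd.
      -- apply: partC.
         have Hin : inDelta I J true (0, 0, 3)%N by rewrite /inDelta /= ?orbT.
         exact: (Hd (exist (fun d => inDelta I J true d) (0, 0, 3)%N Hin)).
      -- move=> j Hj; apply: (partJ (HJpos j Hj) Hspec) => k h Hhk Hdk Hco.
         have Hin0 : inDelta I J false (k, h, 0)%N.
           rewrite /inDelta; apply/orP; left; apply/orP; right.
           apply/and4P; split => //; apply/hasP; by exists j.
         have Hin1 : inDelta I J false (k, h, 1)%N.
           rewrite /inDelta; apply/orP; left; apply/orP; right.
           apply/and4P; split => //; apply/hasP; by exists j.
         split; [exact: (Hd (exist (fun d => inDelta I J false d) (k, h, 0)%N Hin0)) | exact: (Hd (exist (fun d => inDelta I J false d) (k, h, 1)%N Hin1))].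
  + move=> [HI HK]; apply: functional_extensionality => d.
    rewrite !evalA_pt /gbarD.
    case: d => [[[k h] i] Hin] /=.
    move: Hin; rewrite /inDelta => /orP [/orP [H2 | H01] | H3].
    * case/and4P: H2 => /eqP -> Hhk /hasP [i0 Hi0 Hki0] _ /=.
      exact: backI Hhk Hki0 (HIpos _ Hi0) (HI _ Hi0).
    * case/and4P: H01 => Hi Hhk /hasP [j Hj Hkj] Hco.
      have HKf : K = false by apply: HJK; apply/eqP => E; rewrite E in Hj.
      rewrite HKf in HK.
      have Hmem : zmem (LukP k h) (gsel k h).
        case: (ltnP 1 k) => Hk.
        - by have [? _ _] := Hspec.2 k h Hk Hhk Hco.
        - have [Ek Eh] : k = 1%N /\ h = 0%N by lia.
          by subst; rewrite Hspec.1.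
      case/orP: Hi => /eqP -> /=.
      -- exact: backJ Hhk Hkj (HJpos _ Hj) Hmem (HK _ Hj).
      -- exact: backJ Hhk Hkj (HJpos _ Hj) (negPmem Hmem) (HK _ Hj).
    * case/and4P: H3 => HKt /eqP -> /eqP -> /eqP -> /=.
      rewrite HKt in HK; apply: HK => /=; split => //.
Qed.
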